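(* Let $E$ be a countable subfield of $K$ and let $X_1,\ldots,X_m\subset R$ be open balls. Then there is a subset $\Omega$ of the first category in the metric space $X=X_1\times\cdots\times X_m$ such that for every $u=(u_1,\ldots,u_m)\in X\setminus\Omega$ the family $(\delta^iu_j)_{i\ge0,\,1\le j\le m}$ is algebraically independent over $E$.
   Context: Let $p$ be an odd prime, $R$ the unique complete discrete valuation ring with maximal ideal $pR$ and residue field an algebraic closure of $\mathbb F_p$, $K$ its fraction field; $R$ carries the $p$-adic metric, open balls are sets $b+p^NR$. $\phi$ is the unique lift of Frobenius and $\delta a=(\phi(a)-a^p)/p$. A subset of a metric space is of the first category if it is a countable union of subsets whose closures have empty interior. *)

(* Defs.v *)
From HB Require Import structures.
From mathcomp Require Import all_boot all_order all_algebra.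
From mathcomp Require Import mpoly.
Set Implicit Arguments. Unset Strict Implicit. Unset Printing Implicit Defensive.
Import Order.TTheory GRing.Theory Num.Theory.
Local Open Scope ring_scope.

Definition pdvd (R : comNzRingType) (p N : nat) (x : R) : Prop :=
  exists r : R, x = (p%:R) ^+ N * r.

Definition dvr_with_uniformizer (R : comUnitRingType) (p : nat) : Prop :=
  [/\ (p%:R : R) != 0, (p%:R : R) \isn't a GRing.unit &
      forall a : R, a != 0 -> exists n : nat, exists u : R,
        u \is a GRing.unit /\ a = (p%:R) ^+ n * u].

Definition padic_cauchy (R : comNzRingType) (p : nat) (a : nat -> R) : Prop :=
  forall N : nat, exists M : nat, forall m n : nat, (M <= m)%N -> (M <= n)%N ->
    pdvd p N (a m - a n).
Definition padic_lim (R : comNzRingType) (p : nat) (a : nat -> R) (l : R) : Prop :=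
  forall N : nat, exists M : nat, forall n : nat, (M <= n)%N -> pdvd p N (a n - l).
Definition padic_complete (R : comNzRingType) (p : nat) : Prop :=
  forall a : nat -> R, padic_cauchy p a -> exists l : R, padic_lim p a l.

Definition residue_alg_closed (R : comNzRingType) (p : nat) : Prop :=
  forall q : {poly R}, q \is monic -> (1 < size q)%N ->
    exists a : R, pdvd p 1 q.[a].

(* the residue field R/pR is algebraic over its prime field F_p: every residue
   class is a root of a polynomial with coefficients in F_p which is nonzero mod p *)
Definition residue_algebraic (R : comNzRingType) (p : nat) : Prop :=
  forall a : R, exists q : {poly int},
    (exists i : nat, ~~ (p%:Z %| q`_i)%Z) /\ pdvd p 1 (map_poly intr q).[a].

(* R is (the) complete DVR with maximal ideal pR and residue field an
   algebraic closure of F_p *)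
Definition is_W_Fpbar (R : idomainType) (p : nat) : Prop :=
  [/\ dvr_with_uniformizer R p, padic_complete R p,
      residue_alg_closed R p & residue_algebraic R p].

Definition frobenius_lift (R : comNzRingType) (p : nat) (phi : R -> R) : Prop :=
  forall a : R, pdvd p 1 (phi a - a ^+ p).

Definition fraction_field_of (R : idomainType) (K : fieldType) (iota : R -> K) : Prop :=
  injective iota /\ forall k : K, exists a b : R, iota b != 0 /\ k = iota a / iota b.

Definition countable_subfield (K : fieldType) (E : pred K) : Prop :=
  [/\ 0 \in E, 1 \in E,
      (forall x y, x \in E -> y \in E -> x - y \in E),
      (forall x y, x \in E -> y \in E -> x * y \in E) &
      (forall x, x \in E -> x^-1 \in E)] /\
  exists f : nat -> K, forall x, x \in E -> exists n, f n = x.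

Definition alg_indep_over (K : fieldType) (E : pred K) (I : eqType) (x : I -> K) : Prop :=
  forall (n : nat) (s : n.-tuple I), uniq s ->
    forall P : {mpoly K[n]}, (forall m, P@_m \in E) ->
      P.@[fun k : 'I_n => x (tnth s k)] = 0 -> P = 0.

Definition pt (R : Type) (m : nat) := 'I_m -> R.
Definition subset_of (R : Type) (m : nat) := pt R m -> Prop.

Definition pball (R : comNzRingType) (p m : nat) (u : pt R m) (N : nat) : subset_of R m :=
  fun v => forall j, pdvd p N (v j - u j).

Definition closure_in (R : comNzRingType) (p m : nat) (X A : subset_of R m) : subset_of R m :=
  fun u => X u /\ forall N, exists a, A a /\ pball p u N a.

Definition interior_in (R : comNzRingType) (p m : nat) (X B : subset_of R m) : subset_of R m :=
  fun u => X u /\ exists N, forall v, X v -> pball p u N v -> B v.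

Definition first_category_in (R : comNzRingType) (p m : nat) (X Om : subset_of R m) : Prop :=
  exists A : nat -> subset_of R m,
    (forall n u, A n u -> X u) /\
    (forall n u, ~ interior_in p X (closure_in p X (A n)) u) /\
    (forall u, Om u <-> exists n, A n u).

(* Main.v *)
Require Import Defs.
From HB Require Import structures.
From mathcomp Require Import all_boot all_order all_algebra.
From mathcomp Require Import mpoly.
From mathcomp Require Import ring.
From Stdlib Require Import FunctionalExtensionality Classical ClassicalEpsilon.
Import GRing.Theory.
Local Open Scope ring_scope.
Set Implicit Arguments. Unset Strict Implicit. Unset Printing Implicit Defensive.


Section Basics.
Variables (p : nat) (R : idomainType).
Hypothesis (Hdvr : dvr_with_uniformizer R p).

Local Notation pi := (p%:R : R).

Lemma pi_neq0 : pi != 0. Proof. by case: Hdvr. Qed.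
Lemma pi_nunit : pi \isn't a GRing.unit. Proof. by case: Hdvr. Qed.

Lemma pdvd0 e : pdvd p e (0 : R). Proof. by exists 0; rewrite mulr0. Qed.
Lemma pdvdD e (x y : R) : pdvd p e x -> pdvd p e y -> pdvd p e (x + y).
Proof. by move=> [a ->] [b ->]; exists (a + b); rewrite mulrDr. Qed.
Lemma pdvdN e (x : R) : pdvd p e x -> pdvd p e (- x).
Proof. by move=> [a ->]; exists (- a); rewrite mulrN. Qed.
Lemma pdvdB e (x y : R) : pdvd p e x -> pdvd p e y -> pdvd p e (x - y).
Proof. by move=> hx hy; apply: pdvdD => //; apply: pdvdN. Qed.
Lemma pdvdMl e (x y : R) : pdvd p e y -> pdvd p e (x * y).
Proof. by move=> [a ->]; exists (x * a); rewrite mulrCA. Qed.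
Lemma pdvdMr e (x y : R) : pdvd p e x -> pdvd p e (x * y).
Proof. by move=> h; rewrite mulrC; apply: pdvdMl. Qed.
Lemma pdvdX e : pdvd p e (pi ^+ e). Proof. by exists 1; rewrite mulr1. Qed.
Lemma pdvd_le e e' (x : R) : (e <= e')%N -> pdvd p e' x -> pdvd p e x.
Proof.
move=> le [a ->]; exists (pi ^+ (e' - e) * a).
by rewrite mulrA -exprD subnKC.
Qed.
Lemma pdvd_mul e1 e2 (x y : R) : pdvd p e1 x -> pdvd p e2 y -> pdvd p (e1 + e2) (x * y).
Proof.
by move=> [a ->] [b ->]; exists (a * b); rewrite exprD mulrACA.
Qed.
Lemma pdvd_cancel e k (x : R) : pdvd p (e + k) (pi ^+ e * x) -> pdvd p k x.
Proof.
move=> [a]; rewrite exprD -mulrA => /mulfI h; exists a; apply: h.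
by rewrite expf_neq0 // pi_neq0.
Qed.
Lemma pdvd_any (x : R) : pdvd p 0 x. Proof. by exists x; rewrite expr0 mul1r. Qed.

Lemma not_pdvd1_unit (u : R) : u \is a GRing.unit -> ~ pdvd p 1 u.
Proof.
move=> hu [a ha]; move: hu; rewrite ha expr1 unitrM => /andP[h _].
by move: pi_nunit; rewrite h.
Qed.

Lemma not_pdvd1_1 : ~ pdvd p 1 (1 : R).
Proof. by apply: not_pdvd1_unit; rewrite unitr1. Qed.

Lemma val_exists (x : R) : x != 0 -> exists e, ~ pdvd p e x.
Proof.
case: Hdvr => _ _ /(_ x) h /h [n [u [hu ->]]].
exists n.+1 => hd; apply: (not_pdvd1_unit hu).
by apply: (@pdvd_cancel n); rewrite addn1.
Qed.

Lemma pdvd_all (x : R) : (forall e, pdvd p e x) -> x = 0.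
Proof.
move=> h; apply/eqP; apply/negPn/negP => /val_exists [e]; apply; exact: h.
Qed.

Lemma pdvd_big (I : Type) (r : seq I) (F G : I -> R) e :
  (forall i, pdvd p e (F i - G i)) ->
  pdvd p e (\prod_(i <- r) F i - \prod_(i <- r) G i).
Proof.
move=> h; apply: (big_rec2 (fun x y => pdvd p e (x - y))).
  by rewrite subrr; apply: pdvd0.
move=> i x y _ hxy.
have -> : F i * x - G i * y = F i * (x - y) + (F i - G i) * y.
  by rewrite mulrBr mulrBl addrA subrK.
by apply: pdvdD; [apply: pdvdMl | apply: pdvdMr].
Qed.

Lemma pdvd_exp (x y : R) k e : pdvd p e (x - y) -> pdvd p e (x ^+ k - y ^+ k).
Proof.
move=> h; elim: k => [|k ih]; first by rewrite !expr0 subrr; apply: pdvd0.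
have -> : x ^+ k.+1 - y ^+ k.+1 = x * (x ^+ k - y ^+ k) + (x - y) * y ^+ k.
  by rewrite !exprS mulrBr mulrBl addrA subrK.
by apply: pdvdD; [apply: pdvdMl | apply: pdvdMr].
Qed.

Lemma pdvd_sum (I : Type) (r : seq I) (F : I -> R) e :
  (forall i, pdvd p e (F i)) -> pdvd p e (\sum_(i <- r) F i).
Proof.
move=> h; apply: (big_ind (pdvd p e)) => //; first exact: pdvd0.
exact: pdvdD.
Qed.

Lemma pdvd_tr e (x y z : R) : pdvd p e (x - y) -> pdvd p e (y - z) -> pdvd p e (x - z).
Proof. by move=> h1 h2; have := pdvdD h1 h2; rewrite addrA subrK. Qed.

End Basics.


Section Char.
Variables (p : nat) (R : idomainType).
Hypothesis (pr : prime p) (Hdvr : dvr_with_uniformizer R p).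
Local Notation pi := (p%:R : R).

Lemma natr_inj_R (a b : nat) : a%:R = b%:R :> R -> a = b.
Proof.
wlog le : a b / (a <= b)%N.
  move=> h e; case: (leqP a b) => [/h -> //|/ltnW /h hh]; exact/esym/hh/esym.
move=> e; apply/eqP; rewrite eqn_leq le /= leqNgt; apply/negP => lt.
have h0 : (b - a)%:R == 0 :> R by rewrite natrB // e subrr.
have pos : (0 < b - a)%N by rewrite subn_gt0.
have [q /andP [pq /eqP q0]] := natf0_pchar pos h0.
have qp : q != p by apply/eqP => eqp; move: (pi_neq0 Hdvr); rewrite -eqp q0 eqxx.
have cop : coprime q p by rewrite prime_coprime // dvdn_prime2.
have [c _ dv] := Bezoutl p (prime_gt0 pq).
move: dv; rewrite (eqP cop) => /dvdnP [k hk].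
have : (1 + c * p)%:R = 0 :> R by rewrite hk natrM q0 mulr0.
rewrite natrD natrM => /eqP; rewrite addr_eq0 => /eqP h1.
have : pi \is a GRing.unit.
  apply/unitrP; exists (- c%:R); split; first by rewrite mulNr -h1.
  by rewrite mulrN mulrC -h1.
by move: (pi_nunit Hdvr) => /negP.
Qed.

End Char.


Section Phi.
Variables (p : nat) (R : idomainType) (phi : {rmorphism R -> R}).
Hypothesis (pr : prime p) (Hdvr : dvr_with_uniformizer R p)
  (Hres : residue_alg_closed R p) (Hfrob : frobenius_lift p phi).
Local Notation pi := (p%:R : R).

Lemma iterpM k (x y : R) : iter k phi (x * y) = iter k phi x * iter k phi y.
Proof. by elim: k => //= k ->; rewrite rmorphM. Qed.
Lemma iterpD k (x y : R) : iter k phi (x + y) = iter k phi x + iter k phi y.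
Proof. by elim: k => //= k ->; rewrite rmorphD. Qed.
Lemma iterpB k (x y : R) : iter k phi (x - y) = iter k phi x - iter k phi y.
Proof. by elim: k => //= k ->; rewrite rmorphB. Qed.
Lemma iterp1 k : iter k phi 1 = 1.
Proof. by elim: k => //= k ->; rewrite rmorph1. Qed.
Lemma iterp0 k : iter k phi 0 = 0.
Proof. by elim: k => //= k ->; rewrite rmorph0. Qed.
Lemma iterp_nat k n : iter k phi n%:R = n%:R.
Proof. by elim: k => //= k ->; rewrite rmorph_nat. Qed.
Lemma iterpX k (x : R) e : iter k phi (x ^+ e) = (iter k phi x) ^+ e.
Proof. by elim: k => //= k ->; rewrite rmorphXn. Qed.
Lemma iter_pdvd k e (x : R) : pdvd p e x -> pdvd p e (iter k phi x).
Proof. by move=> [a ->]; exists (iter k phi a); rewrite iterpM iterpX iterp_nat. Qed.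

Lemma iterphi_cong k (x : R) : pdvd p 1 (iter k phi x - x ^+ (p ^ k)).
Proof.
elim: k => [|k ih] /=; first by rewrite expn0 expr1 subrr; apply: pdvd0.
have -> : phi (iter k phi x) - x ^+ (p ^ k.+1) =
   (phi (iter k phi x) - (iter k phi x) ^+ p) + ((iter k phi x) ^+ p - (x ^+ (p ^ k)) ^+ p).
  by rewrite -exprM -expnSr addrA subrK.
by apply: pdvdD; [apply: Hfrob | apply: pdvd_exp].
Qed.

Lemma phi_neq0 (x : R) : x != 0 -> phi x != 0.
Proof.
case: Hdvr => _ _ /(_ x) h /h [n [u [hu ->]]].
rewrite rmorphM rmorphXn rmorph_nat mulf_eq0 negb_or expf_neq0 ?(pi_neq0 Hdvr) //=.
apply/negP => /eqP h0; apply: (not_pdvd1_unit Hdvr (u := u ^+ p)); first by rewrite unitrX.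
have := Hfrob u; rewrite h0 sub0r => /pdvdN; by rewrite opprK.
Qed.

Lemma iterphi_neq0 k (x : R) : x != 0 -> iter k phi x != 0.
Proof. by elim: k => //= k ih /ih; apply: phi_neq0. Qed.

Lemma frob1 (x : R) : pdvd p 1 ((x + 1) ^+ p - (x ^+ p + 1)).
Proof.
have p0 := prime_gt0 pr.
rewrite exprDn -(big_mkord xpredT (fun i : nat => (x ^+ (p - i) * 1 ^+ i) *+ 'C(p, i))).
rewrite big_nat_recr //= big_ltn //=.
rewrite subnn bin0 binn expr0 expr1n !mulr1 subn0 !mulr1n.
have -> : forall a b c : R, a + b + c - (a + c) = b.
  by move=> a b c; ring.
rewrite big_seq_cond; apply: (big_ind (pdvd p 1)); first exact: pdvd0.
  exact: pdvdD.
move=> i; rewrite andbT mem_index_iota => /andP [i1 ip].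
have : (p %| 'C(p, i))%N by apply: prime_dvd_bin => //; rewrite i1.
move=> /dvdnP [c ->]; rewrite mulrnA -mulr_natr; apply: pdvdMl; exists 1.
by rewrite expr1 mulr1.
Qed.

Lemma frob1_iter k (x : R) : pdvd p 1 ((x + 1) ^+ (p ^ k) - (x ^+ (p ^ k) + 1)).
Proof.
elim: k => [|k ih]; first by rewrite expn0 !expr1 subrr; apply: pdvd0.
rewrite expnSr !exprM; apply: pdvd_tr; first by apply: pdvd_exp; exact: ih.
exact: frob1.
Qed.

Lemma residue_root r : (0 < r)%N -> exists a : R, pdvd p 1 (a ^+ (p ^ r) - (a + 1)).
Proof.
move=> r0.
have pr1 : (1 < p ^ r)%N by rewrite -{1}(expn0 p) ltn_exp2l ?prime_gt1.
have sz : (size (- ('X + 1) : {poly R}) < size ('X^(p ^ r) : {poly R}))%N.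
  by rewrite size_opp size_polyXn -polyC1 size_XaddC ltnS.
have mon : ('X^(p ^ r) - ('X + 1) : {poly R}) \is monic.
  by rewrite monicE lead_coefDl // lead_coefXn.
have sq : (1 < size (('X^(p ^ r) - ('X + 1))%R : {poly R}))%N.
  by rewrite size_addl // size_polyXn ltnS ltnW.
have [a ha] := Hres mon sq.
by exists a; move: ha; rewrite !hornerE.
Qed.

Lemma phi_distinct_lt i k : (i < k)%N -> exists y : R, iter i phi y != iter k phi y.
Proof.
move=> lt; have [a ha] := residue_root (ltac:(by rewrite subn_gt0) : (0 < k - i)%N).
exists a; apply/negP => /eqP e.
have h : pdvd p 1 (iter k phi a - (iter i phi a + 1)).
  apply: (pdvd_tr (iterphi_cong k a)).
  rewrite -(subnK (ltnW lt)) expnD exprM.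
  apply: (pdvd_tr (pdvd_exp _ ha)).
  apply: (pdvd_tr (frob1_iter i a)).
  rewrite opprD addrACA subrr addr0 -opprB.
  exact/pdvdN/iterphi_cong.
apply: (not_pdvd1_1 Hdvr); rewrite -[1 : R]opprK; apply: pdvdN.
by move: h; rewrite -e opprD addrA subrr add0r.
Qed.

Lemma phi_distinct i k : i != k -> exists y : R, iter i phi y != iter k phi y.
Proof.
move=> ne; case: (ltngtP i k) => h; first exact: phi_distinct_lt.
  by have [y hy] := phi_distinct_lt h; exists y; rewrite eq_sym.
by move: ne; rewrite h eqxx.
Qed.

End Phi.


Lemma dedekind (T : Type) (K : fieldType) (U : T -> Prop) (one : T)
  (mul : T -> T -> T) (I : eqType) (chi : I -> T -> K) (r : seq I) (c : I -> K) :
  U one -> (forall x y, U x -> U y -> U (mul x y)) ->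
  (forall i x y, U x -> U y -> chi i (mul x y) = chi i x * chi i y) ->
  (forall i, chi i one = 1) -> uniq r ->
  (forall i j, i \in r -> j \in r -> i != j -> exists2 x, U x & chi i x != chi j x) ->
  (forall x, U x -> \sum_(i <- r) c i * chi i x = 0) ->
  forall i, i \in r -> c i = 0.
Proof.
move=> U1 UM chiM chi1; elim: r c => [|i0 r ih] c //= /andP [ni0 ur] dist hs.
have step : forall y, U y -> forall i, i \in r -> c i * (chi i y - chi i0 y) = 0.
  move=> y Uy; apply: ih => //.
    by move=> i j ir jr; apply: dist; rewrite inE ?ir ?jr orbT.
  move=> x Ux.
  have h1 := hs _ (UM _ _ Uy Ux); have h2 := hs _ Ux.
  rewrite big_cons in h1; rewrite big_cons in h2.
  have e1 : \sum_(i <- r) c i * chi i (mul y x) = - (c i0 * chi i0 (mul y x)).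
    by apply/eqP; rewrite -addr_eq0 addrC ?h1 ?h2.
  have e2 : \sum_(i <- r) c i * chi i x = - (c i0 * chi i0 x).
    by apply/eqP; rewrite -addr_eq0 addrC ?h1 ?h2.
  have -> : \sum_(i <- r) c i * (chi i y - chi i0 y) * chi i x =
      \sum_(i <- r) c i * chi i (mul y x) - chi i0 y * \sum_(i <- r) c i * chi i x.
    rewrite mulr_sumr -sumrB; apply: eq_bigr => i _; rewrite chiM //; ring.
  by rewrite e1 e2 chiM //; ring.
have cr : forall i, i \in r -> c i = 0.
  move=> i ir.
  have ne : i0 != i by apply/eqP => e; move: ni0; rewrite e ir.
  have [y Uy hy] := dist i0 i (mem_head _ _) (ltac:(by rewrite inE ir orbT)) ne.
  have := step y Uy i ir; move/eqP; rewrite mulf_eq0 subr_eq0 [chi i y == _]eq_sym (negbTE hy) orbF.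
  by move/eqP.
move=> i; rewrite inE => /orP [/eqP ->|]; last exact: cr.
have := hs _ U1; rewrite big_cons chi1 mulr1 big_seq big1 ?addr0 //.
by move=> j jr; rewrite cr // mul0r.
Qed.

Lemma mpoly_dedekind (K : fieldType) (n : nat) (P : {mpoly K[n]})
  (U : ('I_n -> K) -> Prop) (a : 'I_n -> K) :
  U (fun _ => 1) -> (forall x y, U x -> U y -> U (fun i => x i * y i)) ->
  (forall al be : 'X_{1..n}, al != be ->
     exists2 x, U x & \prod_i x i ^+ al i != \prod_i x i ^+ be i) ->
  (forall i, a i != 0) ->
  (forall x, U x -> P.@[fun i => a i * x i] = 0) -> P = 0.
Proof.
move=> U1 UM sep a0 hP.
have key : forall mo, mo \in msupp P -> P@_mo * \prod_i a i ^+ mo i = 0.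
  move=> mo.
  apply: (@dedekind ('I_n -> K) K U (fun _ => 1) (fun x y i => x i * y i) _
           (fun (al : 'X_{1..n}) (x : 'I_n -> K) => \prod_i x i ^+ al i) (msupp P)
           (fun mo => P@_mo * \prod_i a i ^+ mo i)) => //.
  - by move=> al x y _ _; rewrite -big_split /=; apply: eq_bigr => i _; rewrite exprMn.
  - by move=> al; apply: big1 => i _; rewrite expr1n.
  - by move=> al be _ _; apply: sep.
  - move=> x Ux; rewrite -[RHS](hP x Ux) mevalE; apply: eq_bigr => mo0 _.
    rewrite -mulrA -big_split /=; congr (_ * _); apply: eq_bigr => i _.
    by rewrite exprMn.
apply/eqP; rewrite -msupp_eq0; apply/eqP.
case E: (msupp P) => [|mo s] //; exfalso.
have mm : mo \in msupp P by rewrite E mem_head.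
move: (key mo mm) => /eqP; rewrite mulf_eq0 => /orP [|].
  by rewrite mcoeff_eq0 mm.
rewrite prodf_seq_eq0 => /hasP [i _ /=]; rewrite expf_eq0 => /andP [_ /eqP ai].
by move: (a0 i); rewrite ai eqxx.
Qed.


Fixpoint Dd (S : comPzRingType) (p : nat) (ip : S) (i : nat) (y : nat -> S) : S :=
  match i with
  | 0 => y 0%N
  | i'.+1 => ip * (Dd p ip i' (fun k => y k.+1) - (Dd p ip i' y) ^+ p)
  end.

Lemma Dd_ext (S : comPzRingType) p (ip : S) i (y y' : nat -> S) :
  (forall k, (k <= i)%N -> y k = y' k) -> Dd p ip i y = Dd p ip i y'.
Proof.
elim: i y y' => [|i ih] y y' h /=; first exact: h.
rewrite (ih y y') ?(ih (fun k => y k.+1) (fun k => y' k.+1)) //.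
  by move=> k hk; apply: h.
by move=> k hk; apply: h; apply: leqW.
Qed.

Lemma Dd_rmorph (S S' : comPzRingType) (f : {rmorphism S -> S'}) p (ip : S) i (y : nat -> S) :
  f (Dd p ip i y) = Dd p (f ip) i (fun k => f (y k)).
Proof.
elim: i y => [|i ih] y //=.
by rewrite rmorphM rmorphB rmorphXn !ih.
Qed.

Fixpoint Ph (S : comPzRingType) (p : nat) (k : nat) (w : nat -> S) : S :=
  match k with
  | 0 => w 0%N
  | k'.+1 => Ph p k' (fun l => w l ^+ p + p%:R * w l.+1)
  end.

Lemma Dd_Ph (S : comPzRingType) p (ip : S) : ip * p%:R = 1 ->
  forall i w, Dd p ip i (fun k => Ph p k w) = w i.
Proof.
move=> hip; elim=> [|i ih] w //=.
rewrite (ih (fun l => w l ^+ p + p%:R * w l.+1)) ih.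
by rewrite addrAC subrr add0r mulrA hip mul1r.
Qed.


Section Pairs.
Variable (m : nat).

Definition slist (I : nat) : seq (nat * 'I_m) := [seq (i, j) | i <- iota 0 I.+1, j <- enum 'I_m].

Lemma slist_uniq I : uniq (slist I).
Proof.
apply: allpairs_uniq; rewrite ?iota_uniq ?enum_uniq //.
by move=> [a b] [c d] _ _ /= [-> ->].
Qed.

Lemma mem_slist I i j : ((i, j) \in slist I) = (i <= I)%N.
Proof.
apply/idP/idP.
  by move=> /allpairsP [[a b] [ha _ e]]; case: e => -> _; move: ha; rewrite mem_iota add0n ltnS.
by move=> hi; rewrite /slist; apply: allpairs_f; rewrite ?mem_iota ?add0n ?ltnS ?mem_enum.
Qed.

Definition varp (K : fieldType) (I : nat) (ij : nat * 'I_m) : {mpoly K[size (slist I)]} :=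
  if (insub (index ij (slist I)) : option 'I_(size (slist I))) is Some o then 'X_o else 0.

Lemma varp_eval (K : fieldType) I ij (z : 'I_(size (slist I)) -> K) : ij \in slist I ->
  exists o : 'I_(size (slist I)), tnth (in_tuple (slist I)) o = ij /\ (varp K I ij).@[z] = z o.
Proof.
move=> hij; have hlt : (index ij (slist I) < size (slist I))%N by rewrite index_mem.
exists (Ordinal hlt); rewrite /varp (insubT (fun k => k < size (slist I))%N hlt); split; last by rewrite mevalXU.
by rewrite (tnth_nth ij) /= nth_index.
Qed.

End Pairs.

Section Jets.
Variables (p : nat) (R : idomainType) (K : fieldType) (iota : {rmorphism R -> K})
  (phi : {rmorphism R -> R}) (delta : R -> R) (m : nat).
Hypotheses (pr : prime p) (Hdvr : dvr_with_uniformizer R p)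
  (Hdelta : forall a, p%:R * delta a = phi a - a ^+ p) (Hinj : injective iota).

Definition djet n (s : n.-tuple (nat * 'I_m)) (v : 'I_m -> R) : 'I_n -> K :=
  fun k => iota (iter (tnth s k).1 delta (v (tnth s k).2)).
Definition pjet N (s' : N.-tuple (nat * 'I_m)) (v : 'I_m -> R) : 'I_N -> K :=
  fun o => iota (iter (tnth s' o).1 phi (v (tnth s' o).2)).

Lemma pK0 : (p%:R : K) != 0.
Proof.
apply/eqP => h; have := pi_neq0 Hdvr.
by rewrite -(inj_eq Hinj) rmorph_nat rmorph0 h eqxx.
Qed.

Lemma natK_inj a b : a%:R = b%:R :> K -> a = b.
Proof.
by rewrite -!(rmorph_nat iota) => /Hinj; apply: (natr_inj_R pr Hdvr).
Qed.

Lemma delta_phi x : delta (phi x) = phi (delta x).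
Proof.
apply: (mulfI (pi_neq0 Hdvr)); rewrite Hdelta.
by rewrite -[in RHS](rmorph_nat phi p) -rmorphM Hdelta rmorphB rmorphXn.
Qed.

Lemma iter_delta_phi i x : iter i delta (phi x) = phi (iter i delta x).
Proof. by elim: i => //= i ->; rewrite delta_phi. Qed.

Lemma Dd_delta i x :
  iota (iter i delta x) = Dd p (p%:R)^-1 i (fun k => iota (iter k phi x)).
Proof.
elim: i x => [|i ih] x //=.
have -> : (fun k => iota (iter k.+1 phi x)) = (fun k => iota (iter k phi (phi x))).
  by apply: FunctionalExtensionality.functional_extensionality => k; rewrite iterSr.
rewrite -!ih iter_delta_phi -rmorphXn -rmorphB -Hdelta rmorphM rmorph_nat.
by rewrite mulrA mulVf ?pK0 // mul1r.
Qed.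

Lemma mnm_neq n (al be : 'X_{1..n}) : al != be -> exists k, al k != be k.
Proof.
move=> ne; case: (pickP (fun k => al k != be k)) => [k hk | h]; first by exists k.
have e : al = be by apply/mnmP => k; apply/eqP; move: (h k) => /negbFE.
by rewrite e eqxx in ne.
Qed.

Lemma sep_all n (al be : 'X_{1..n}) : al != be ->
  exists2 x : 'I_n -> K, True & \prod_i x i ^+ al i != \prod_i x i ^+ be i.
Proof.
move=> /mnm_neq [k0 hk]; exists (fun i => if i == k0 then 2 else 1) => //.
have e : forall ga : 'X_{1..n}, \prod_i (if i == k0 then 2 else 1 : K) ^+ ga i = (2 ^ ga k0)%:R.
  move=> ga; rewrite (bigD1 k0) //= eqxx big1 ?mulr1 ?natrX //.
  by move=> i /negbTE ->; rewrite expr1n.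
rewrite !e; apply/negP => /eqP /natK_inj /(expnI (isT : (1 < 2)%N)) h; move: hk; by rewrite h eqxx.
Qed.

Lemma Gexists n (s : n.-tuple (nat * 'I_m)) (Q : {mpoly K[n]}) :
  exists N (s' : N.-tuple (nat * 'I_m)) (G : {mpoly K[N]}),
    [/\ uniq s', (forall v, Q.@[djet s v] = G.@[pjet s' v]) & (uniq s -> Q != 0 -> G != 0)].
Proof.
pose I := \max_(x <- s) x.1.
have hI : forall k : 'I_n, ((tnth s k).1 <= I)%N.
  by move=> k; apply: (@leq_bigmax_seq _ s xpredT (fun x => x.1)); rewrite ?mem_tnth.
pose sl := slist m I; pose N := size sl.
pose ip := (((p%:R : K)^-1)%:MP : {mpoly K[N]}).
pose lq := [tuple Dd p ip (tnth s k).1 (fun l => varp K I (l, (tnth s k).2)) | k < n].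
exists N, (in_tuple sl), (Q \mPo lq).
have evalG : forall z, (Q \mPo lq).@[z] = Q.@[fun k => Dd p (p%:R)^-1 (tnth s k).1
     (fun l => (varp K I (l, (tnth s k).2)).@[z])].
  move=> z; rewrite comp_mpoly_meval; apply: meval_eq => k; rewrite tnth_mktuple.
  by rewrite (Dd_rmorph (meval z)) /= mevalC.
split.
- exact: slist_uniq.
- move=> v; rewrite evalG; apply: meval_eq => k /=; rewrite /djet Dd_delta.
  apply: Dd_ext => l hl.
  have mem : (l, (tnth s k).2) \in sl by rewrite mem_slist (leq_trans hl (hI k)).
  have [o [ho ->]] := varp_eval (pjet (in_tuple sl) v) mem.
  by rewrite /pjet ho.
- move=> us Q0; apply/negP => /eqP G0; move/negP: Q0; apply; apply/eqP.
  apply: (@mpoly_dedekind K n Q (fun _ => True) (fun _ => 1)) => //.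
  + by move=> al be; apply: sep_all.
  + by move=> i; rewrite oner_neq0.
  move=> x _.
  pose w := fun (j : 'I_m) (i : nat) =>
    if (insub (index (i, j) s) : option 'I_n) is Some k then x k else 0.
  have := congr1 (meval (fun o => Ph p (tnth (in_tuple sl) o).1 (w (tnth (in_tuple sl) o).2))) G0.
  rewrite evalG meval0 => <-; apply: meval_eq => k; rewrite mul1r.
  transitivity (Dd p (p%:R)^-1 (tnth s k).1 (fun l => Ph p l (w (tnth s k).2))).
    rewrite Dd_Ph ?mulVf ?pK0 // /w -surjective_pairing.
    have hk : (index (tnth s k) s < n)%N.
      by rewrite (tnth_nth (tnth s k)) index_uniq // size_tuple.
    rewrite (insubT (fun i => i < n)%N hk); congr (x _); apply: val_inj => /=.
    by rewrite (tnth_nth (tnth s k)) index_uniq // size_tuple.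
  symmetry.
  apply: Dd_ext => l hl.
  have mem : (l, (tnth s k).2) \in sl by rewrite mem_slist (leq_trans hl (hI k)).
  by have [o [ho ->]] := varp_eval (fun o => Ph p (tnth (in_tuple sl) o).1 (w (tnth (in_tuple sl) o).2)) mem; rewrite ho.
Qed.

End Jets.


Lemma expand1 (R : comPzRingType) (q b : R) e :
  exists r, (1 + q * b) ^+ e = 1 + q * (e%:R * b) + q ^+ 2 * r.
Proof.
elim: e => [|e [r hr]]; first by exists 0; rewrite expr0 mul0r mulr0 mulr0 !addr0.
exists (e%:R * b ^+ 2 + r + r * q * b); rewrite exprS hr -natr1; ring.
Qed.

Lemma expand (R : comPzRingType) (I : Type) (r : seq I) (q : R) (e : I -> nat) (b : I -> R) :
  exists t, \prod_(i <- r) (1 + q * b i) ^+ e i = 1 + q * \sum_(i <- r) (e i)%:R * b i + q ^+ 2 * t.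
Proof.
apply: (big_rec2 (fun P S => exists t, P = 1 + q * S + q ^+ 2 * t)).
  by exists 0; rewrite mulr0 mulr0 !addr0.
move=> i P S _ [t ->]; have [r1 ->] := expand1 q (b i) (e i).
exists (((e i)%:R * b i) * S + r1 + t + q * (((e i)%:R * b i) * t + r1 * S) + q ^+ 2 * r1 * t).
ring.
Qed.

Section Ball.
Variables (p : nat) (R : idomainType) (K : fieldType) (iota : {rmorphism R -> K})
  (phi : {rmorphism R -> R}) (m : nat).
Hypotheses (pr : prime p) (Hdvr : dvr_with_uniformizer R p)
  (Hres : residue_alg_closed R p) (Hfrob : frobenius_lift p phi) (Hinj : injective iota).
Local Notation pi := (p%:R : R).

Lemma tnth_inj_uniq (T : eqType) (N : nat) (s' : N.-tuple T) (o o' : 'I_N) (x0 : T) :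
  uniq s' -> tnth s' o = tnth s' o' -> o = o'.
Proof.
move=> us; rewrite !(tnth_nth x0) => /eqP; rewrite nth_uniq ?size_tuple //.
by move=> /eqP /val_inj.
Qed.

Lemma sepU N (s' : N.-tuple (nat * 'I_m)) L (al be : 'X_{1..N}) : uniq s' -> al != be ->
  exists2 w : 'I_m -> R, (forall j, pdvd p L (w j - 1)) &
    \prod_o (pjet iota phi s' w o) ^+ al o != \prod_o (pjet iota phi s' w o) ^+ be o.
Proof.
move=> us /mnm_neq [k0 hk].
set j0 := (tnth s' k0).2.
apply: NNPP => hno.
have hall : forall w, (forall j, pdvd p L (w j - 1)) ->
    \prod_o (pjet iota phi s' w o) ^+ al o = \prod_o (pjet iota phi s' w o) ^+ be o.
  move=> w hw; apply/eqP; apply/negPn/negP => hne; apply: hno; by exists w.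
pose b (y : R) (o : 'I_N) := if (tnth s' o).2 == j0 then iter (tnth s' o).1 phi y else 0.
pose D (y : R) := \sum_o ((al o)%:R - (be o)%:R) * b y o.
have D0 : forall y, D y = 0.
  move=> y; apply: (pdvd_all Hdvr) => e.
  pose L2 := (maxn e L).+1; pose q := pi ^+ L2.
  pose w := fun j => if j == j0 then 1 + q * y else 1.
  have hw : forall j, pdvd p L (w j - 1).
    move=> j; rewrite /w; case: (j == j0); last by rewrite subrr; apply: pdvd0.
    rewrite addrAC subrr add0r; apply: pdvdMr; apply: (pdvd_le (e' := L2)).
      by rewrite /L2 leqW // leq_maxr.
    exact: pdvdX.
  have hpj : forall o, pjet iota phi s' w o = iota (1 + q * b y o).
    move=> o; rewrite /pjet /b /w; case: ((tnth s' o).2 == j0).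
      by rewrite iterpD iterp1 iterpM iterpX iterp_nat.
    by rewrite iterp1 mulr0 addr0.
  have eP : forall ga : 'X_{1..N},
      \prod_o pjet iota phi s' w o ^+ ga o = iota (\prod_o (1 + q * b y o) ^+ ga o).
    by move=> ga; rewrite rmorph_prod; apply: eq_bigr => o _; rewrite rmorphXn hpj.
  have := hall w hw; rewrite !eP => /Hinj.
  have [t1 ->] := expand (index_enum 'I_N) q (fun o => al o) (b y).
  have [t2 ->] := expand (index_enum 'I_N) q (fun o => be o) (b y).
  have q0 : q != 0 by rewrite expf_neq0 // (pi_neq0 Hdvr).
  move=> h.
  have hD : D y = q * (t2 - t1).
    apply: (mulfI q0).
    have -> : D y = \sum_(i <- index_enum 'I_N) (al i)%:R * b y i -
                    \sum_(i <- index_enum 'I_N) (be i)%:R * b y i.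
      by rewrite -sumrB; apply: eq_bigr => o _; rewrite mulrBl.
    move: h; set A := \sum_(i <- _) _; set B := \sum_(i <- _) _ => h.
    have : q * (A - B) - q * (q * (t2 - t1)) = 0.
      by rewrite -[LHS]subr0 -[X in _ - X](subrr (1 + q * A + q ^+ 2 * t1)) {2}h; ring.
    by move/eqP; rewrite subr_eq0 => /eqP.
  rewrite hD; apply: (pdvd_le (e' := L2)); first by rewrite /L2 leqW // leq_maxl.
  exact/pdvdMr/pdvdX.
have ck : ((al k0)%:R - (be k0)%:R : K) = 0.
apply: (@dedekind R K (fun _ => True) 1 *%R _ (fun o y => iota (iter (tnth s' o).1 phi y))
   [seq o <- index_enum 'I_N | (tnth s' o).2 == j0] (fun o => (al o)%:R - (be o)%:R)) => //.
- by move=> o x y _ _; rewrite iterpM rmorphM.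
- by move=> o; rewrite iterp1 rmorph1.
- by rewrite filter_uniq ?index_enum_uniq.
- move=> o o'; rewrite !mem_filter => /andP [ho _] /andP [ho' _] ne.
  have ni : (tnth s' o).1 != (tnth s' o').1.
    apply/negP => /eqP e; move/negP: ne; apply; apply/eqP.
    apply: (tnth_inj_uniq (tnth s' o) us).
    by rewrite [tnth s' o]surjective_pairing [tnth s' o']surjective_pairing e (eqP ho) (eqP ho').
  have [y hy] := phi_distinct pr Hdvr Hres Hfrob ni.
  by exists y => //; rewrite (inj_eq Hinj).
- move=> y _; rewrite big_filter big_mkcond /=.
  have := congr1 iota (D0 y); rewrite rmorph0 rmorph_sum => h0; rewrite -[RHS]h0.
  apply: eq_bigr => o _; rewrite /b; case: ((tnth s' o).2 == j0).
    by rewrite rmorphM rmorphB !rmorph_nat.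
  by rewrite mulr0 rmorph0.
- by rewrite mem_filter eqxx mem_index_enum.
move: ck => /eqP; rewrite subr_eq0 => /eqP /(natK_inj pr Hdvr Hinj) e.
by move: hk; rewrite e eqxx.
Qed.

Lemma ball_nonzero N (s' : N.-tuple (nat * 'I_m)) (G : {mpoly K[N]}) : uniq s' -> G != 0 ->
  forall (u : 'I_m -> R) L, exists v, (forall j, pdvd p L (v j - u j)) /\
     G.@[pjet iota phi s' v] != 0.
Proof.
move=> us G0 u L.
apply: NNPP => hno.
have hall : forall v, (forall j, pdvd p L.+1 (v j - u j)) -> G.@[pjet iota phi s' v] = 0.
  move=> v hv; apply/eqP; apply/negPn/negP => hne; apply: hno; exists v; split => // j.
  exact: (pdvd_le (leqnSn L) (hv j)).
pose v0 := fun j => if u j == 0 then pi ^+ L.+1 else u j.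
have hv0 : forall j, pdvd p L.+1 (v0 j - u j).
  move=> j; rewrite /v0; case: eqP => [->|_]; first by rewrite subr0; exact: pdvdX.
  by rewrite subrr; exact: pdvd0.
have v00 : forall j, v0 j != 0.
  move=> j; rewrite /v0; case: ifP => [_|/negbT //]; by rewrite expf_neq0 // (pi_neq0 Hdvr).
move/negP: G0; apply; apply/eqP.
apply: (@mpoly_dedekind K N G (fun z => exists2 w, (forall j, pdvd p L.+1 (w j - 1)) &
   forall o, z o = pjet iota phi s' w o) (pjet iota phi s' v0)).
- exists (fun _ => 1); first by move=> j; rewrite subrr; apply: pdvd0.
  by move=> o; rewrite /pjet iterp1 rmorph1.
- move=> x y [w1 h1 e1] [w2 h2 e2]; exists (fun j => w1 j * w2 j).
    move=> j; have -> : w1 j * w2 j - 1 = (w1 j - 1) * w2 j + (w2 j - 1) by ring.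
    by apply: pdvdD; [apply: pdvdMr|].
  by move=> o; rewrite e1 e2 /pjet iterpM rmorphM.
- move=> al be ne; have [w hw hne] := sepU L.+1 us ne.
  by exists (pjet iota phi s' w) => //; exists w.
- move=> o; rewrite /pjet -(rmorph0 iota) (inj_eq Hinj).
  exact: (iterphi_neq0 Hdvr Hfrob _ (v00 _)).
move=> z [w hw ez].
rewrite -(hall (fun j => v0 j * w j)).
  by apply: meval_eq => o; rewrite ez /pjet iterpM rmorphM.
move=> j; have -> : v0 j * w j - u j = (v0 j - u j) + v0 j * (w j - 1) by ring.
by apply: pdvdD; [|apply: pdvdMl].
Qed.

End Ball.


Section Cont.
Variables (p : nat) (R : idomainType) (K : fieldType) (iota : {rmorphism R -> K})
  (phi : {rmorphism R -> R}) (m : nat).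
Hypotheses (Hdvr : dvr_with_uniformizer R p) (Hfrac : fraction_field_of iota).

Lemma clear_den N (G : {mpoly K[N]}) : exists d : R, d != 0 /\ exists G' : {mpoly R[N]},
  forall z : 'I_N -> R, iota d * G.@[fun o => iota (z o)] = iota (G'.@[z]).
Proof.
elim/mpolyind: G => [|c mo Q _ _ [d1 [d10 [Q1 hQ]]]].
  by exists 1; split; [exact: oner_neq0 | exists 0 => z; rewrite !meval0 mulr0 rmorph0].
have [a [b [b0 ->]]] := (proj2 Hfrac) c.
have bR0 : b != 0 by apply/eqP => e; move: b0; rewrite e rmorph0 eqxx.
exists (b * d1); split; first by rewrite mulf_neq0.
exists ((a * d1) *: 'X_[mo] + b *: Q1) => z.
rewrite !mevalD !mevalZ !mevalX !rmorphD !rmorphM -hQ rmorph_prod.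
have -> : \prod_i iota (z i ^+ mo i) = \prod_i iota (z i) ^+ mo i.
  by apply: eq_bigr => i _; rewrite rmorphXn.
field; exact: b0.
Qed.

Lemma mpoly_cong N (P : {mpoly R[N]}) e (y y' : 'I_N -> R) :
  (forall o, pdvd p e (y o - y' o)) -> pdvd p e (P.@[y] - P.@[y']).
Proof.
move=> h; rewrite !mevalE -sumrB; apply: pdvd_sum => mo.
rewrite -mulrBr; apply: pdvdMl; apply: pdvd_big => i; exact: pdvd_exp.
Qed.

Lemma continuity N (s' : N.-tuple (nat * 'I_m)) (G : {mpoly K[N]}) (v : 'I_m -> R) :
  G.@[pjet iota phi s' v] != 0 ->
  exists e, forall v', (forall j, pdvd p e (v' j - v j)) -> G.@[pjet iota phi s' v'] != 0.
Proof.
move=> G0; have [d [d0 [G' hG]]] := clear_den G.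
pose zv (v : 'I_m -> R) o := iter (tnth s' o).1 phi (v (tnth s' o).2).
have hv : forall v, iota d * G.@[pjet iota phi s' v] = iota (G'.@[zv v]).
  by move=> w; rewrite -hG.
have id0 : iota d != 0 by rewrite -(rmorph0 iota) (inj_eq (proj1 Hfrac)).
have g0 : G'.@[zv v] != 0.
  by rewrite -(inj_eq (proj1 Hfrac)) rmorph0 -hv mulf_neq0.
have [e he] := val_exists Hdvr g0.
exists e => v' hv'; apply/negP => /eqP h'.
have g'0 : G'.@[zv v'] = 0.
  by apply: (proj1 Hfrac); rewrite -hv h' mulr0 rmorph0.
apply: he; have := mpoly_cong G' (y := zv v') (y' := zv v) (e := e).
rewrite g'0 sub0r => h; rewrite -[G'.@[_]]opprK; apply: pdvdN; apply: h => o.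
by rewrite /zv -iterpB; apply: iter_pdvd.
Qed.

End Cont.


Definition uj (R : Type) (m : nat) (z : R) (u : 'I_m -> R) (j : nat) : R :=
  if (insub j : option 'I_m) is Some o then u o else z.

Definition codeD (K : fieldType) (m : nat) (g : K -> nat) n (s : n.-tuple (nat * 'I_m))
  (P : {mpoly K[n]}) : nat * seq (nat * nat) * seq (seq nat * nat) :=
  (n, [seq (x.1, val x.2) | x <- s], [seq ([seq (mo : 'X_{1..n}) i | i <- enum 'I_n], g P@_mo) | mo : 'X_{1..n} <- msupp P]).

Definition valdata (R : zmodType) (K : fieldType) (iota : R -> K) (delta : R -> R) (m : nat)
  (f : nat -> K) (d : nat * seq (nat * nat) * seq (seq nat * nat)) (u : 'I_m -> R) : K :=
  \sum_(x <- d.2) f x.2 * \prod_(0 <= i < size x.1)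
     (iota (iter (nth (0, 0) d.1.2 i).1 delta (uj 0 u (nth (0, 0) d.1.2 i).2))) ^+ nth 0%N x.1 i.

Lemma valdata_code (R : idomainType) (K : fieldType) (iota : {rmorphism R -> K}) (delta : R -> R)
  (m : nat) (f : nat -> K) (g : K -> nat) n (s : n.-tuple (nat * 'I_m)) (P : {mpoly K[n]}) u :
  (forall mo, f (g P@_mo) = P@_mo) ->
  P.@[djet iota delta s u] = valdata iota delta f (codeD g s P) u.
Proof.
move=> hfg; rewrite mevalE /valdata /codeD /= big_map; apply: eq_bigr => mo _ /=.
rewrite hfg; congr (_ * _).
rewrite size_map size_enum_ord big_mkord; apply: eq_bigr => i _.
have hi : (i < size (enum 'I_n))%N by rewrite size_enum_ord.
have hs : (i < size s)%N by rewrite size_tuple.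
rewrite (nth_map i) // (nth_map (tnth s i)) // -tnth_nth /djet.
have -> : nth i (enum 'I_n) i = i by apply: val_inj; rewrite /= nth_enum_ord.
by rewrite /uj valK.
Qed.


Section Core.
Variables (p : nat) (R : idomainType) (K : fieldType) (iota : {rmorphism R -> K})
  (phi : {rmorphism R -> R}) (delta : R -> R) (m : nat).
Hypotheses (pr : prime p) (Hdvr : dvr_with_uniformizer R p)
  (Hres : residue_alg_closed R p) (Hfrob : frobenius_lift p phi)
  (Hdelta : forall a, p%:R * delta a = phi a - a ^+ p) (Hfrac : fraction_field_of iota).

Lemma core_ball n (s : n.-tuple (nat * 'I_m)) (Q : {mpoly K[n]}) : uniq s -> Q != 0 ->
  forall u L, exists v, (forall j, pdvd p L (v j - u j)) /\ Q.@[djet iota delta s v] != 0.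
Proof.
move=> us Q0 u L.
have [N [s' [G [us' hG hG0]]]] := Gexists pr Hdvr Hdelta (proj1 Hfrac) s Q.
have [v [hv hv0]] := ball_nonzero pr Hdvr Hres Hfrob (proj1 Hfrac) us' (hG0 us Q0) u L.
by exists v; split => //; rewrite hG.
Qed.

Lemma core_cont n (s : n.-tuple (nat * 'I_m)) (Q : {mpoly K[n]}) v :
  Q.@[djet iota delta s v] != 0 ->
  exists e, forall v', (forall j, pdvd p e (v' j - v j)) -> Q.@[djet iota delta s v'] != 0.
Proof.
have [N [s' [G [us' hG hG0]]]] := Gexists pr Hdvr Hdelta (proj1 Hfrac) s Q.
rewrite hG => h; have [e he] := continuity Hdvr Hfrac h.
by exists e => v' hv'; rewrite hG; apply: he.
Qed.

End Core.

Unset Implicit Arguments.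

Theorem lemma3p11 (p : nat) (R : idomainType) (K : fieldType)
    (iota : {rmorphism R -> K}) (phi : {rmorphism R -> R}) (delta : R -> R)
    (E : pred K) (m : nat) (b : 'I_m -> R) (Nb : 'I_m -> nat) :
  prime p -> odd p ->
  is_W_Fpbar R p ->
  frobenius_lift p phi ->
  (forall a : R, p%:R * delta a = phi a - a ^+ p) ->
  fraction_field_of iota ->
  countable_subfield E ->
  let X : subset_of R m := fun u => forall j, pdvd p (Nb j) (u j - b j) in
  exists Om : subset_of R m,
    first_category_in p X Om /\
    forall u : pt R m, X u -> ~ Om u ->
      alg_indep_over E (fun ij : nat * 'I_m => iota (iter ij.1 delta (u ij.2))).
Proof.
move=> pr _ [Hdvr _ Hres _] Hfrob Hdelta Hfrac [_ [f hf]] X.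
have exg : forall c : K, exists k, c \in E -> f k = c.
  move=> c; case: (boolP (c \in E)) => [/hf [k hk] | hn]; first by exists k.
  by exists 0%N.
pose g := fun c : K => proj1_sig (constructive_indefinite_description _ (exg c)).
have gP : forall c, c \in E -> f (g c) = c.
  by move=> c; rewrite /g; case: constructive_indefinite_description.
pose good n (s : n.-tuple (nat * 'I_m)) (P : {mpoly K[n]}) k :=
  [/\ uniq s, (forall mo, P@_mo \in E), P != 0 & pickle (codeD g s P) = k].
pose vk k (u : 'I_m -> R) := if unpickle k is Some d then valdata iota delta f d u else 1.
have vkP : forall n s P k, good n s P k -> forall u, vk k u = P.@[djet iota delta s u].
  move=> n s P k [_ hE _ <-] u; rewrite /vk pickleK (@valdata_code _ _ iota delta m f g) //.
  by move=> mo; rewrite gP.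
pose A k (u : 'I_m -> R) := [/\ X u, (exists n s P, good n s P k) & vk k u = 0].
exists (fun u => exists k, A k u); split.
  exists A; split; first by move=> k u [].
  split; last by [].
  move=> k u [Xu [N hN]].
  have [_ /(_ 0%N) [a [[_ [n [s [P hg]]] _] _]]] : closure_in p X (A k) u.
    by apply: (hN u Xu) => j; rewrite subrr; exact: pdvd0.
  have [us _ P0 _] := hg.
  pose L := maxn N (\max_j Nb j).
  have [v [hv hv0]] := core_ball pr Hdvr Hres Hfrob Hdelta Hfrac us P0 u L.
  have Xv : X v.
    move=> j; have -> : v j - b j = (v j - u j) + (u j - b j) by ring.
    apply: pdvdD; last exact: Xu.
    apply: (pdvd_le _ (hv j)); apply: leq_trans (leq_maxr _ _).
    exact: leq_bigmax.
  have [_ hcl] := hN v Xv (fun j => pdvd_le (leq_maxl _ _) (hv j)).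
  have [e he] := core_cont pr Hdvr Hdelta Hfrac hv0.
  have [a' [[_ _ va] hpa]] := hcl e.
  by move: (he a' hpa); rewrite -(vkP _ _ _ _ hg) va eqxx.
move=> u Xu nOm n s us P hE hP; apply/eqP; apply/negPn/negP => P0.
apply: nOm; exists (pickle (codeD g s P)); split => //.
  by exists n, s, P; split.
by rewrite (vkP n s P) //; split.
Qed.
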